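(* Let $\mathcal{H},\mathcal{K}$ be finite-dimensional Hilbert spaces and $\Gamma:\mathcal{B}(\mathcal{H})\to\mathcal{B}(\mathcal{K})$ a completely positive trace-preserving map. Suppose there exist a completely positive map $\mathcal{F}:\mathcal{B}(\mathcal{H})\to\mathcal{B}(\mathcal{K})$ and a real number $\epsilon>0$ such that for every density operator $\rho$ on $\mathcal{H}$, $\epsilon\le\operatorname{tr}[\mathcal{F}(\rho)]$ and $\mathcal{F}(\rho)=\operatorname{tr}[\mathcal{F}(\rho)]\,\Gamma(\rho)$. Then either $\Gamma(\cdot)=\rho'\operatorname{tr}[\cdot]$ for some density operator $\rho'$ on $\mathcal{K}$, or $\Gamma=\mathcal{F}/p$ for some positive number $p$. *)

(* Defs.v *)
(* Scalars: an arbitrary numClosedFieldType C (e.g. algC, or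
   complex R = R[i] for a real closed field R); the complex numbers are an instance. *)
From HB Require Import structures.
From mathcomp Require Import all_boot all_order all_algebra.
From mathcomp Require Import mxtens.
Set Implicit Arguments. Unset Strict Implicit. Unset Printing Implicit Defensive.
Import Order.TTheory GRing.Theory Num.Theory.
Local Open Scope ring_scope.

Section Quantum.
Variable C : numClosedFieldType.

Definition psd n (A : 'M[C]_n) : Prop :=
  forall v : 'cV[C]_n, 0 <= (((map_mx Num.conj v)^T *m A *m v) 0 0).

Definition density n (A : 'M[C]_n) : Prop := psd A /\ \tr A = 1.

(* Ampliation id_k (x) Phi acting on B(C^k (x) C^n) = 'M_(k*n). *)
Definition ampl k n m (Phi : 'M[C]_n -> 'M[C]_m) (X : 'M[C]_(k * n)) : 'M[C]_(k * m) :=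
  \matrix_(i, j)
    Phi (\matrix_(a, b) X (mxtens_index ((mxtens_unindex i).1, a))
                          (mxtens_index ((mxtens_unindex j).1, b)))
        (mxtens_unindex i).2 (mxtens_unindex j).2.

Definition completely_positive n m (Phi : 'M[C]_n -> 'M[C]_m) : Prop :=
  forall k (X : 'M[C]_(k * n)), psd X -> psd (@ampl k n m Phi X).

Definition trace_preserving n m (Phi : 'M[C]_n -> 'M[C]_m) : Prop :=
  forall X, \tr (Phi X) = \tr X.

End Quantum.

(* Main.v *)
Require Import Defs.
From HB Require Import structures.
From mathcomp Require Import all_boot all_order all_algebra mxtens ring.
From Stdlib Require Import Classical.
Import Order.TTheory GRing.Theory Num.Theory.
Set Implicit Arguments. Unset Strict Implicit. Unset Printing Implicit Defensive.
Local Open Scope ring_scope.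

Section H.
Variable C : numClosedFieldType.

Lemma psd_add n (A B : 'M[C]_n) : psd A -> psd B -> psd (A + B).
Proof. by move=> hA hB v; rewrite mulmxDr mulmxDl mxE addr_ge0. Qed.

Lemma psd_scale n (c : C) (A : 'M[C]_n) : 0 <= c -> psd A -> psd (c *: A).
Proof. by move=> hc hA v; rewrite -scalemxAr -scalemxAl mxE mulr_ge0. Qed.

Lemma psd_diag n (A : 'M[C]_n) i : psd A -> 0 <= A i i.
Proof.
move=> /(_ (delta_mx i 0)).
have -> : map_mx Num.conj (delta_mx i 0 : 'cV[C]_n) = delta_mx i 0.
  by apply/matrixP=> a b; rewrite !mxE; case: (_ && _); rewrite ?conjC1 ?conjC0.
by rewrite trmx_delta -rowE -colE !mxE.
Qed.

Lemma psd_tr_ge0 n (A : 'M[C]_n) : psd A -> 0 <= \tr A.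
Proof. by move=> hA; rewrite /mxtrace sumr_ge0 // => i _; apply: psd_diag. Qed.

Lemma psd_rank1 n (u : 'cV[C]_n) : psd (u *m (map_mx Num.conj u)^T).
Proof.
move=> v; rewrite mulmxA -mulmxA mxE big_ord1.
set a := ((map_mx Num.conj v)^T *m u) 0 0.
have -> : ((map_mx Num.conj u)^T *m v) 0 0 = a^*.
  rewrite /a !mxE rmorph_sum; apply: eq_bigr => i _.
  by rewrite !mxE rmorphM /= conjCK mulrC.
exact: mul_conjC_ge0.
Qed.

Lemma conj_delta n m (i : 'I_n) (j : 'I_m) :
  map_mx Num.conj (delta_mx i j : 'M[C]_(n, m)) = delta_mx i j.
Proof. by apply/matrixP=> a b; rewrite !mxE; case: (_ && _); rewrite ?conjC1 ?conjC0. Qed.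

Lemma density_delta n (i : 'I_n) : density (delta_mx i i : 'M[C]_n).
Proof.
split; last first.
  rewrite /mxtrace (bigD1 i) //= mxE !eqxx big1 ?addr0 // => k /negbTE nk.
  by rewrite mxE nk.
have := psd_rank1 (delta_mx i 0 : 'cV[C]_n).
by rewrite conj_delta trmx_delta mul_delta_mx.
Qed.

Lemma vanish n m (i0 : 'I_n) (L : 'M[C]_n -> 'M[C]_m)
  (hL : forall a X Y, L (a *: X + Y) = a *: L X + L Y)
  (h0 : forall X, density X -> L X = 0) : forall X, L X = 0.
Proof.
have L0 : L 0 = 0.
  have := hL 1 0 0; rewrite scaler0 addr0 scale1r => e.
  by apply: (addrI (L 0)); rewrite addr0 -e.
have LD X Y : L (X + Y) = L X + L Y by have := hL 1 X Y; rewrite !scale1r.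
have LZ a X : L (a *: X) = a *: L X by have := hL a X 0; rewrite !addr0 L0 addr0.
have hp A : psd A -> L A = 0.
  move=> pA; set E := delta_mx i0 i0 : 'M[C]_n.
  have dE : density E := density_delta i0.
  set t := \tr A + 1.
  have tp : 0 < t by rewrite /t ltr_wpDl ?psd_tr_ge0 ?ltr01.
  have tn : t != 0 by rewrite gt_eqF.
  have dB : density (t^-1 *: (A + E)).
    split; first by apply: psd_scale; [rewrite invr_ge0 ltW | apply: psd_add => //; case: dE].
    by rewrite mxtraceZ mxtraceD dE.2 mulVf.
  have e1 : A + E = t *: (t^-1 *: (A + E)) by rewrite scalerA divff // scale1r.
  have := LD A E; rewrite e1 LZ h0 // (h0 E) // scaler0 addr0 => <-; done.
have hq (i j : 'I_n) (c : C) :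
   L (delta_mx i i) + c^* *: L (delta_mx i j) + c *: L (delta_mx j i)
   + (c * c^*) *: L (delta_mx j j) = 0.
  set u := (delta_mx i 0 + c *: delta_mx j 0 : 'cV[C]_n).
  have hu : (map_mx Num.conj u)^T = delta_mx 0 i + c^* *: delta_mx 0 j.
    apply/matrixP=> a b; rewrite !mxE rmorphD rmorphM /=.
    by rewrite !(andbC (a == 0)) !rmorph_nat.
  have := hp _ (psd_rank1 u); rewrite hu /u mulmxDl !mulmxDr -!scalemxAl -!scalemxAr.
  rewrite !mul_delta_mx !LD !LZ scalerA => <-.
  by rewrite !addrA.
have hd i : L (delta_mx i i) = 0.
  have := hq i i 0; rewrite conjC0 mul0r !scale0r !addr0. done.
have hij i j : L (delta_mx i j) = 0.
  have h1 := hq i j 1; have h2 := hq i j 'i.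
  rewrite !hd conjC1 !scale1r !scaler0 add0r addr0 in h1.
  rewrite !hd conjCi !scaler0 add0r addr0 in h2.
  apply/matrixP=> a b; have /matrixP/(_ a b) := h1; have /matrixP/(_ a b) := h2.
  rewrite !mxE.
  set x := L (delta_mx i j) a b; set y := L (delta_mx j i) a b.
  move=> e2 e1.
  have e : 'i * 'i = -1 :> C by rewrite -expr2 sqrCi.
  have : x *+ 2 = (x + y) + 'i * (- 'i * x + 'i * y).
    rewrite mulrDr !mulrA mulrN e; ring.
  rewrite e1 e2 mulr0 addr0 => /eqP; rewrite mulrn_eq0 /= => /eqP ->.
  done.
move=> X; rewrite (matrix_sum_delta X).
rewrite (big_morph L LD L0) big1 // => i _.
rewrite (big_morph L LD L0) big1 // => j _.
by rewrite LZ hij scaler0.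
Qed.

Lemma qform n (A : 'M[C]_n) (v : 'cV[C]_n) :
  ((map_mx Num.conj v)^T *m A *m v) 0 0 =
  \sum_i \sum_j (v i 0)^* * A i j * v j 0.
Proof.
rewrite mxE exchange_big; apply: eq_bigr => j _.
rewrite mxE big_distrl; apply: eq_bigr => i _.
by rewrite !mxE.
Qed.

Lemma psd_perm k n (g : 'I_k -> 'I_n) (h : 'I_n -> 'I_k)
  (hg : cancel h g) (gh : cancel g h) (Z : 'M[C]_n) :
  psd Z -> psd (\matrix_(i, j) Z (g i) (g j)).
Proof.
move=> pZ v; have := pZ (\col_a v (h a) 0).
have bh : {on [pred i | true], bijective h} by apply: onW_bij; exists g.
rewrite !qform (reindex h bh) /=.
congr (0 <= _); apply: eq_bigr => a _.
rewrite (reindex h bh); apply: eq_bigr => b _.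
by rewrite !mxE !hg.
Qed.

Definition g1 p (i : 'I_(1 * p)) : 'I_p := (mxtens_unindex i).2.
Definition h1 p (a : 'I_p) : 'I_(1 * p) := mxtens_index (ord0, a).
Lemma hg1 p : cancel (@h1 p) (@g1 p).
Proof. by move=> a; rewrite /g1 /h1 mxtens_indexK. Qed.
Lemma gh1 p : cancel (@g1 p) (@h1 p).
Proof.
move=> i; rewrite /g1 /h1 -[in RHS](mxtens_unindexK i).
by case: (mxtens_unindex i) => x a /=; rewrite (ord1 x).
Qed.

Lemma cp_psd n m (Phi : 'M[C]_n -> 'M[C]_m) :
  completely_positive Phi -> forall Y, psd Y -> psd (Phi Y).
Proof.
move=> cp Y pY.
have := cp 1 _ (psd_perm (@hg1 n) (@gh1 n) pY).
have -> : ampl Phi (\matrix_(i, j) Y (g1 i) (g1 j)) =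
          \matrix_(i, j) Phi Y (g1 i) (g1 j).
  apply/matrixP=> i j; rewrite !mxE; congr (Phi _ _ _).
  by apply/matrixP=> a b; rewrite !mxE /g1 !mxtens_indexK.
move=> /(psd_perm (@gh1 m) (@hg1 m)).
by congr psd; apply/matrixP=> a b; rewrite !mxE !hg1.
Qed.
End H.

Theorem lemma3 (C : numClosedFieldType) (n m : nat)
  (Gamma F : {linear 'M[C]_n -> 'M[C]_m}) (eps : C) :
  completely_positive Gamma -> trace_preserving Gamma ->
  completely_positive F -> 0 < eps ->
  (forall rho : 'M[C]_n, density rho ->
     eps <= \tr (F rho) /\ F rho = \tr (F rho) *: Gamma rho) ->
  (exists rho' : 'M[C]_m, density rho' /\ forall X, Gamma X = \tr X *: rho')
  \/ (exists p : C, 0 < p /\ forall X, Gamma X = p^-1 *: F X).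
Proof.
move=> cpG tpG cpF eps0 H.
case: n Gamma F cpG tpG cpF H => [|n] Gamma F cpG tpG cpF H.
  right; exists 1; split => // X.
  by rewrite invr1 scale1r (flatmx0 X) !linear0.
pose r0 := delta_mx ord0 ord0 : 'M[C]_n.+1.
have dr0 : density r0 := @density_delta C _ ord0.
pose f X := \tr (F X).
have pair r1 r2 : density r1 -> density r2 -> f r1 = f r2 \/ Gamma r1 = Gamma r2.
  move=> d1 d2.
  have ds : density (2^-1 *: (r1 + r2)).
    split; first by apply: psd_scale; [rewrite invr_ge0 ler0n | apply: psd_add; [case: d1|case: d2]].
    rewrite mxtraceZ mxtraceD d1.2 d2.2 mulVf //.
    by rewrite pnatr_eq0.
  have [_ Hs] := H _ ds.
  have [_ H1] := H _ d1; have [_ H2] := H _ d2.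
  have eF : F (2^-1 *: (r1 + r2)) = 2^-1 *: (F r1 + F r2) by rewrite linearZ linearD.
  have eG : Gamma (2^-1 *: (r1 + r2)) = 2^-1 *: (Gamma r1 + Gamma r2) by rewrite linearZ linearD.
  rewrite eF eG mxtraceZ mxtraceD in Hs.
  rewrite /f; set f1 := \tr (F r1) in H1 Hs *; set f2 := \tr (F r2) in H2 Hs *.
  rewrite H1 H2 in Hs.
  have [e|ne] := eqVneq f1 f2; [by left | right].
  apply/matrixP=> a b; have /matrixP/(_ a b) := Hs; rewrite !mxE.
  set g1 := Gamma r1 a b; set g2 := Gamma r2 a b.
  move=> E.
  have : (f1 - f2) * (g1 - g2) = 4%:R * (2^-1 * (f1 * g1 + f2 * g2)
       - 2^-1 * (f1 + f2) * (2^-1 * (g1 + g2))).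
    have h2 : (2%:R : C) != 0 by rewrite pnatr_eq0.
    by field.
  rewrite E subrr mulr0 => /eqP; rewrite mulf_eq0 subr_eq0 (negbTE ne) /=.
  by rewrite subr_eq0 => /eqP.
have [allf|] := classic (forall r, density r -> f r = f r0).
  right; have [ep Hr0] := H _ dr0.
  set p := \tr (F r0) in ep Hr0.
  have pp : 0 < p by apply: lt_le_trans ep.
  have pn : p != 0 by rewrite gt_eqF.
  exists p; split => // X; apply/subr0_eq; move: X.
  apply: (@vanish C _ _ ord0 (fun X => Gamma X - p^-1 *: F X)).
    move=> a X Y; rewrite !linearD !linearZ /=.
    by rewrite addrACA.
  move=> X dX; have [_ HX] := H _ dX.
  have fX : \tr (F X) = p by apply: allf.
  by rewrite HX fX scalerA mulVf // scale1r subrr.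
move=> nall; have [a Ha] := not_all_ex_not _ _ nall.
have [da nfa] := imply_to_and _ _ Ha.
have Gc r : density r -> Gamma r = Gamma r0.
  move=> dr.
  have Ga : Gamma a = Gamma r0.
    by case: (pair _ _ da dr0) => // e; case: nfa.
  case: (pair _ _ dr dr0) => // e.
  case: (pair _ _ dr da) => [e'|//]; last by rewrite -Ga.
  by case: nfa; rewrite -e' e.
left; exists (Gamma r0); split.
  split; first by apply: cp_psd cpG _ _; case: dr0.
  by rewrite tpG dr0.2.
move=> X; apply/subr0_eq; move: X.
apply: (@vanish C _ _ ord0 (fun X => Gamma X - \tr X *: Gamma r0)).
  move=> b X Y; rewrite !linearD !linearZ /=.
  by rewrite scalerDl scalerA (mulrC (\tr X)) addrACA.
move=> X dX; by rewrite Gc // dX.2 scale1r subrr.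
Qed.
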